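(* Let $H\in\mathbb{R}^{n\times n}$ be symmetric positive definite with LDL decomposition $H=(\grave U+I)D(\grave U+I)^T$ ($\grave U$ strictly upper triangular, $D$ diagonal). Let $w\in\mathbb{R}^{1\times n}$ and let $\mathcal{Q}:\mathbb{R}\to\mathbb{R}$ be any rounding map, for example nearest rounding to a finite grid with clamping. Run the OPTQ procedure on $w$. Then for each $t=1,\dots,n$ the value produced by OPTQ is $$\hat w_t=\mathcal{Q}\big(w_t+(w-\hat w)\grave U e_t\big)=\mathcal{Q}\big(w_t-(\hat w_{1:(t-1)}-w_{1:(t-1)})\grave U_{1:(t-1),t}\big).$$ Thus OPTQ coincides with adaptive rounding with linear feedback using $U=\grave U$ (i.e. LDLQ).
   Context: OPTQ procedure: quantize the entries of the row vector $w$ in the order $t=1,\dots,n$. At step $t$, with $\hat w_1,\dots,\hat w_{t-1}$ already fixed, set $\Delta_{1:(t-1)}=\hat w_{1:(t-1)}-w_{1:(t-1)}$. Let $\Delta^*_{t:n}\in\mathbb{R}^{1\times(n-t+1)}$ minimize the proxy loss $\Delta H\Delta^T$ over $\Delta_{t:n}$, where $\Delta=(\Delta_{1:(t-1)},\Delta_{t:n})$. Explicitly, $\Delta^*_{t:n}=-\Delta_{1:(t-1)}H_{1:(t-1),t:n}(H_{t:n,t:n})^{-1}$. Then set $\hat w_t=\mathcal{Q}(w_t+(\Delta^*_{t:n})_1)$, where $(\cdot)_1$ is the first entry. $e_t$ is the $t$-th standard basis vector. Subscript ranges denote submatrices and subvectors. *)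

(* Defs.v *)
From HB Require Import structures.
From mathcomp Require Import all_boot all_order all_algebra.
From mathcomp Require Import reals.
Unset Printing Implicit Defensive.
Import Order.TTheory GRing.Theory Num.Theory.
Local Open Scope ring_scope.

Section OPTQ.
Variable R : realType.
Variable n : nat.

Definition sym_posdef (H : 'M[R]_n) : Prop :=
  H^T = H /\ forall x : 'rV[R]_n, x != 0 -> 0 < (x *m H *m x^T) 0 0.

Definition strict_upper (U : 'M[R]_n) : Prop :=
  forall i j : 'I_n, (j <= i)%N -> U i j = 0.

Lemma ord_sub_gt0 (t : 'I_n) : (0 < n - t)%N.
Proof. by rewrite subn_gt0. Qed.

Lemma ord_shift_lt (t : 'I_n) (j : 'I_(n - t)) : (t + j < n)%N.
Proof.
have := ltn_ord j; have := ltn_ord t; move=> Ht Hj.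
by rewrite -ltn_subRL.
Qed.

(* index maps: 1:(t-1) (0-based: indices < t) and t:n (0-based: indices >= t) *)
Definition lo_idx (t : 'I_n) (i : 'I_t) : 'I_n :=
  widen_ord (ltnW (ltn_ord t)) i.
Definition hi_idx (t : 'I_n) (j : 'I_(n - t)) : 'I_n :=
  Ordinal (@ord_shift_lt t j).
Definition first_idx (t : 'I_n) : 'I_(n - t) := Ordinal (ord_sub_gt0 t).

(* Delta*_{t:n} = - Delta_{1:(t-1)} H_{1:(t-1),t:n} (H_{t:n,t:n})^{-1},
   where Delta_{1:(t-1)} = v_{1:(t-1)} - w_{1:(t-1)} (v = already fixed entries) *)
Definition delta_star (H : 'M[R]_n) (w v : 'rV[R]_n) (t : 'I_n) : 'rV[R]_(n - t) :=
  let Dprev : 'rV[R]_t := \row_(i < t) (v 0 (lo_idx t i) - w 0 (lo_idx t i)) in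
  let H12 : 'M[R]_(t, n - t) := \matrix_(i < t, j < n - t) H (lo_idx t i) (hi_idx t j) in
  let H22 : 'M[R]_(n - t) := \matrix_(i < n - t, j < n - t) H (hi_idx t i) (hi_idx t j) in
  - (Dprev *m H12 *m invmx H22).

(* OPTQ: after k steps, entries 0..k-1 are quantized (0-based); the remaining
   entries still hold w and are never read by later steps. *)
Fixpoint optq_rec (H : 'M[R]_n) (Q : R -> R) (w : 'rV[R]_n) (k : nat) : 'rV[R]_n :=
  match k with
  | 0 => w
  | k'.+1 =>
      let v := optq_rec H Q w k' in
      match (insub k' : option 'I_n) with
      | Some t => \row_j (if j == t then Q (w 0 t + delta_star H w v t 0 (first_idx t))
                          else v 0 j)
      | None => v
      end
  end.

Definition optq (H : 'M[R]_n) (Q : R -> R) (w : 'rV[R]_n) : 'rV[R]_n :=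
  optq_rec H Q w n.

End OPTQ.

Arguments sym_posdef {R n}.
Arguments strict_upper {R n}.
Arguments delta_star {R n}.
Arguments optq_rec {R n}.
Arguments optq {R n}.

(* Main.v *)
Require Import Defs.
From HB Require Import structures.
From mathcomp Require Import all_boot all_order all_algebra.
From mathcomp Require Import reals.
Import Order.TTheory GRing.Theory Num.Theory.
Local Open Scope ring_scope.

Lemma rec_hi (R : realType) (n : nat) (H : 'M[R]_n) Q w k (j : 'I_n) :
  (k <= j)%N -> optq_rec H Q w k 0 j = w 0 j.
Proof.
elim: k => [//|k IH] Hk /=.
case: insubP => [t _ Ht|_]; last by apply: IH; apply: ltnW.
rewrite mxE; have -> : (j == t) = false.
  by apply/negbTE; apply/eqP => Ejt; move: Hk; rewrite Ejt Ht ltnn.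
by apply: IH; apply: ltnW.
Qed.

Lemma rec_stable (R : realType) (n : nat) (H : 'M[R]_n) Q w k (j : 'I_n) :
  (j < k)%N -> optq_rec H Q w k 0 j = optq_rec H Q w j.+1 0 j.
Proof.
elim: k => [//|k IH] Hk.
have [Ejk|Njk] := eqVneq (j : nat) k; first by rewrite Ejk.
have Hjk : (j < k)%N by rewrite ltn_neqAle Njk -ltnS.
rewrite /= -IH //.
case: insubP => [t _ Ht|_] //.
rewrite mxE; have -> : (j == t) = false.
  by apply/negbTE; apply/eqP => Ejt; move: Njk; rewrite Ejt Ht eqxx.
by [].
Qed.

Lemma rec_step (R : realType) (n : nat) (H : 'M[R]_n) Q w (t : 'I_n) :
  optq_rec H Q w t.+1 0 t =
  Q (w 0 t + delta_star H w (optq_rec H Q w t) t 0 (first_idx n t)).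
Proof. by rewrite /= valK mxE eqxx. Qed.

Lemma L_low (R : realType) n (U : 'M[R]_n) : strict_upper U ->
  forall i k : 'I_n, (k < i)%N -> (U + 1%:M) i k = 0.
Proof.
move=> SU i k Hki; rewrite !mxE SU; last exact: ltnW.
by rewrite eq_sym -(inj_eq val_inj) /= (ltn_eqF Hki) add0r.
Qed.

Lemma L_diag (R : realType) n (U : 'M[R]_n) : strict_upper U ->
  forall i : 'I_n, (U + 1%:M) i i = 1.
Proof. by move=> SU i; rewrite !mxE SU // eqxx add0r. Qed.

Lemma H_entry (R : realType) n (H L D : 'M[R]_n) : is_diag_mx D ->
  H = L *m D *m L^T -> forall a b, H a b = \sum_k L a k * D k k * L b k.
Proof.
move=> /is_diag_mxP dD -> a b; rewrite mxE; apply: eq_bigr => k _.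
rewrite !mxE (bigD1 k) //= big1 ?addr0 // => l Hl.
by rewrite dD ?mulr0 // (inj_eq val_inj).
Qed.

Lemma reindex_hi (R : realType) n (t : 'I_n) (F : 'I_n -> R) :
  (forall k : 'I_n, (k < t)%N -> F k = 0) ->
  \sum_k F k = \sum_(j < n - t) F (hi_idx n t j).
Proof.
move=> F0; rewrite (bigID (fun k : 'I_n => (t <= k)%N)) /=.
rewrite [X in _ + X]big1 ?addr0; last by move=> k; rewrite -ltnNge; apply: F0.
rewrite (reindex_onto (hi_idx n t) (fun k : 'I_n => insubd (first_idx n t) (k - t)%N)) /=.
  apply: eq_bigl => j; rewrite leq_addr /=; apply/eqP/val_inj.
  by rewrite val_insubd /= addKn ltn_ord.
move=> k Hk; apply/val_inj; rewrite /= val_insubd.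
have -> : (k - t < n - t)%N by rewrite ltn_sub2r ?ltn_ord //; apply: leq_ltn_trans Hk _.
by rewrite subnKC.
Qed.

Lemma L_unit (R : realType) n (U : 'M[R]_n) : strict_upper U ->
  (U + 1%:M) \in unitmx.
Proof.
move=> SU; rewrite unitmxE -det_tr det_trig.
  by rewrite big1 ?unitr1 // => i _; rewrite mxE L_diag.
by apply/is_trig_mxP => i j Hij; rewrite mxE L_low.
Qed.

Lemma D_pos (R : realType) n (H U D : 'M[R]_n) :
  sym_posdef H -> strict_upper U -> is_diag_mx D ->
  H = (U + 1%:M) *m D *m (U + 1%:M)^T -> forall k, 0 < D k k.
Proof.
move=> [_ PD] SU dD EH k.
have uL := L_unit _ _ _ SU.
set y : 'rV[R]_n := delta_mx 0 k *m invmx (U + 1%:M).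
have yL : y *m (U + 1%:M) = delta_mx 0 k by rewrite /y mulmxKV.
have y0 : y != 0.
  apply/eqP => y0; move: yL; rewrite y0 mul0mx => /matrixP /(_ 0 k).
  by rewrite !mxE !eqxx /= => /eqP; rewrite eq_sym oner_eq0.
have := PD y y0; rewrite EH !mulmxA yL -mulmxA -trmx_mul yL.
by rewrite -rowE trmx_delta -colE !mxE.
Qed.

Lemma block_fact (R : realType) n (H U D : 'M[R]_n) (t : 'I_n) m (ra : 'I_m -> 'I_n) :
  strict_upper U -> is_diag_mx D ->
  H = (U + 1%:M) *m D *m (U + 1%:M)^T ->
  \matrix_(i < m, j < n - t) H (ra i) (hi_idx n t j) =
  (\matrix_(i < m, j < n - t) (U + 1%:M) (ra i) (hi_idx n t j)) *m
  diag_mx (\row_(j < n - t) D (hi_idx n t j) (hi_idx n t j)) *m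
  (\matrix_(i < n - t, j < n - t) (U + 1%:M) (hi_idx n t i) (hi_idx n t j))^T.
Proof.
move=> SU dD EH; apply/matrixP => i j.
rewrite mul_mx_diag !mxE (H_entry _ _ _ _ _ dD EH).
rewrite (reindex_hi _ _ t); last first.
  move=> k Hk; rewrite [(U + 1%:M) (hi_idx n t j) k](L_low _ _ _ SU) ?mulr0 //.
  by apply: (leq_trans Hk); rewrite /= leq_addr.
by apply: eq_bigr => k _; rewrite !mxE.
Qed.

Lemma L22_unit (R : realType) n (U : 'M[R]_n) (t : 'I_n) : strict_upper U ->
  (\matrix_(i < n - t, j < n - t) (U + 1%:M) (hi_idx n t i) (hi_idx n t j)) \in unitmx.
Proof.
move=> SU; rewrite unitmxE -det_tr det_trig.
  by rewrite big1 ?unitr1 // => i _; rewrite 2!mxE (L_diag _ _ _ SU).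
apply/is_trig_mxP => i j Hij; rewrite 2!mxE (L_low _ _ _ SU) //.
by rewrite /= ltn_add2l.
Qed.

Lemma D2_unit (R : realType) n (H U D : 'M[R]_n) (t : 'I_n) :
  sym_posdef H -> strict_upper U -> is_diag_mx D ->
  H = (U + 1%:M) *m D *m (U + 1%:M)^T ->
  diag_mx (\row_(j < n - t) D (hi_idx n t j) (hi_idx n t j)) \in unitmx.
Proof.
move=> PD SU dD EH; rewrite unitmxE det_diag unitfE.
rewrite lt0r_neq0 //; apply: prodr_gt0 => i _; rewrite mxE.
exact: (D_pos _ _ _ _ _ PD SU dD EH).
Qed.

Lemma key (R : realType) n (H U D : 'M[R]_n) (t : 'I_n) (i : 'I_t) :
  sym_posdef H -> strict_upper U -> is_diag_mx D ->
  H = (U + 1%:M) *m D *m (U + 1%:M)^T ->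
  ((\matrix_(i < t, j < n - t) H (lo_idx n t i) (hi_idx n t j)) *m
   invmx (\matrix_(i < n - t, j < n - t) H (hi_idx n t i) (hi_idx n t j)))
    i (first_idx n t) = U (lo_idx n t i) t.
Proof.
move=> PD SU dD EH.
rewrite (block_fact _ _ _ _ _ t _ (lo_idx n t) SU dD EH).
rewrite (block_fact _ _ _ _ _ t _ (hi_idx n t) SU dD EH).
set L12 := \matrix_(i < t, j < n - t) _.
set L22 := \matrix_(i < n - t, j < n - t) _.
set D2 := diag_mx _.
have u22 : L22 \in unitmx by apply: L22_unit.
have uD2 : D2 \in unitmx by apply: (D2_unit _ _ H U D t PD SU dD EH).
have uH : L22 *m D2 *m L22^T \in unitmx by rewrite !unitmx_mul unitmx_tr u22 uD2.
set X := L12 *m D2 *m L22^T *m invmx _.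
have XL : X *m L22 = L12.
  have : X *m (L22 *m D2 *m L22^T) = L12 *m D2 *m L22^T by rewrite /X mulmxKV.
  rewrite !mulmxA => /(congr1 (mulmx^~ (invmx L22^T))); rewrite !mulmxK ?unitmx_tr //.
  by move/(congr1 (mulmx^~ (invmx D2))); rewrite !mulmxK.
clearbody X.
have hf : hi_idx n t (first_idx n t) = t by apply: val_inj; rewrite /= addn0.
have := congr1 (fun M : 'M[R]_(t, n - t) => M i (first_idx n t)) XL; rewrite /= mxE.
rewrite (bigD1 (first_idx n t)) //= big1; last first.
  move=> k Hk; rewrite /L22 mxE; rewrite (L_low _ _ _ SU) ?mulr0 //.
  rewrite /= ltn_add2l lt0n; apply: contra Hk => /eqP k0.
  by apply/eqP/val_inj; rewrite /= k0.
rewrite /L22 /L12 mxE (L_diag _ _ _ SU) mulr1 addr0 => ->.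
rewrite mxE !mxE hf.
have -> : (lo_idx n t i == t) = false.
  by apply/negbTE; rewrite -(inj_eq val_inj) /= neq_ltn ltn_ord.
by rewrite addr0.
Qed.

Theorem theorem6 (R : realType) (n : nat) (H U D : 'M[R]_n) (w : 'rV[R]_n)
    (Q : R -> R) :
  sym_posdef H -> strict_upper U -> is_diag_mx D ->
  H = (U + 1%:M) *m D *m (U + 1%:M)^T ->
  forall t : 'I_n,
    optq H Q w 0 t = Q (w 0 t + ((w - optq H Q w) *m U) 0 t) /\
    optq H Q w 0 t =
      Q (w 0 t - \sum_(i < n | (i < t)%N) (optq H Q w 0 i - w 0 i) * U i t).
Proof.
move=> PD SU dD EH t.
have E2 : optq H Q w 0 t =
      Q (w 0 t - \sum_(i < n | (i < t)%N) (optq H Q w 0 i - w 0 i) * U i t).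
  rewrite {1}/optq (rec_stable _ _ _ _ _ n t (ltn_ord t)) rec_step.
  congr (Q (_ + _)).
  rewrite /delta_star /= -mulmxA mxE mxE; congr (- _).
  rewrite (big_ord_narrow (ltnW (ltn_ord t))) /=.
  apply: eq_bigr => j _.
  rewrite (key _ _ _ _ _ t j PD SU dD EH) mxE.
  rewrite /optq (rec_stable _ _ _ _ _ n (lo_idx n t j) (ltn_ord _)).
  by rewrite (rec_stable _ _ _ _ _ t (lo_idx n t j) (ltn_ord j)).
split=> //; rewrite E2; congr (Q (_ + _)).
rewrite mxE -sumrN [RHS](bigID (fun i : 'I_n => (i < t)%N)) /=.
rewrite [X in _ = _ + X]big1 ?addr0; last first.
  by move=> i; rewrite -leqNgt => Hi; rewrite SU ?mulr0.
by apply: eq_bigr => i _; rewrite !mxE -mulNr opprB.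
Qed.
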